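(* For every integer $n\ge 1$, with $\omega_n:=\max\{r: c_r(n)\neq 0\}$ the clique number of $G_n$, \[ \chi(K_n)=\sum_{r=1}^{\omega_n}(-1)^{r-1}c_r(n)=\chi(N_n). \]
   Context: $G_n$ is the partition graph on the set of integer partitions of $n$: two partitions are adjacent if one is obtained from the other by decreasing one part by $1$ and increasing another part (possibly a part equal to $0$) by $1$, followed by reordering, with the result different from the original. $K_n=\operatorname{Cl}(G_n)$ is its clique complex, and $c_r(n)$ is the number of $r$-vertex cliques of $G_n$. For $\lambda=(\lambda_1\ge\lambda_2\ge\cdots)\vdash n$ of length $\ell$, a removable corner is a row $i$ with $\lambda_i>\lambda_{i+1}$, and an addable corner is a row $j\le\ell+1$ with $j=1$ or $\lambda_{j-1}>\lambda_j$. For a removable corner $c=i$ and addable corner $a=j$, $i\ne j$, $\lambda(c\to a)$ is obtained by decreasing $\lambda_i$ by $1$, increasing $\lambda_j$ by $1$, and reordering; the transfer is admissible if $\lambda(c\to a)\ne\lambda$. With $A_{\max}(\lambda,c)=\{a:\lambda(c\to a)\text{ admissible}\}$ and $C_{\max}(\lambda,a)=\{c:\lambda(c\to a)\text{ admissible}\}$, the full star-simplex is $\Sigma^{\star}_{\max}(\lambda,c)=\{\lambda\}\cup\{\lambda(c\to a):a\in A_{\max}(\lambda,c)\}$ and the full top-simplex is $\Sigma^{\top}_{\max}(\lambda,a)=\{\lambda\}\cup\{\lambda(c\to a):c\in C_{\max}(\lambda,a)\}$. $C_n$ is the family of all distinct full star- and full top-simplices (each regarded as a full simplex subcomplex of $K_n$),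 and $N_n$ is its nerve: the simplicial complex on vertex set $C_n$ whose simplices are nonempty subfamilies with nonempty common intersection. *)

(* Defs.v *)
From mathcomp Require Import all_boot all_order all_algebra.
Set Implicit Arguments. Unset Strict Implicit. Unset Printing Implicit Defensive.
Import GRing.Theory.

(* A partition of n is encoded by its rows lambda_1 >= lambda_2 >= ... padded
   with zeros to exactly n+1 rows (rows indexed 0..n, 0-based).  Since any
   partition of n has length <= n, the last row is always 0, so row l+1
   (the "zero part" / addable corner below the last row) always exists. *)

Definition ptf (n : nat) (f : {ffun 'I_n.+1 -> 'I_n.+1}) (k : nat) : nat :=
  nth 0 [seq val (f i) | i <- enum 'I_n.+1] k.

Definition is_part (n : nat) (f : {ffun 'I_n.+1 -> 'I_n.+1}) : bool :=
  [forall i : 'I_n.+1, ptf f i.+1 <= ptf f i] && ((\sum_i val (f i)) == n).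

Definition part (n : nat) := {f : {ffun 'I_n.+1 -> 'I_n.+1} | @is_part n f}.

(* value of row k (0-based), 0 beyond the stored rows *)
Definition pt (n : nat) (l : part n) (k : nat) : nat := ptf (val l) k.

(* [moved l m i j] : m is obtained from l by decreasing row i by 1 and
   increasing row j by 1 (then reordering): equality as multisets of rows. *)
Definition moved (n : nat) (l m : part n) (i j : nat) : bool :=
  (0 < pt l i) &&
  perm_eq [seq pt l k + (k == j) - (k == i) | k <- iota 0 n.+1]
          [seq pt m k | k <- iota 0 n.+1].

Definition adj (n : nat) (l m : part n) : bool :=
  (l != m) && [exists i : 'I_n.+1, exists j : 'I_n.+1,
                 (i != j) && moved l m i j].

Definition is_clique (n : nat) (S : {set part n}) : bool :=
  [forall x in S, forall y in S, (x != y) ==> adj x y].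

Definition ccount (n r : nat) : nat :=
  #|[set S : {set part n} | is_clique S && (#|S| == r)]|.

(* clique number omega_n = max { r : c_r(n) <> 0 }; c_r(n) = 0 for r > #|G_n| *)
Definition omega (n : nat) : nat :=
  \max_(r < #|{: part n}|.+1 | ccount n r != 0) r.

Definition euler_K (n : nat) : int :=
  (\sum_(S : {set part n} | is_clique S && (S != set0)) (-1) ^+ (#|S|.-1))%R.

Definition removable (n : nat) (l : part n) (i : 'I_n.+1) : bool :=
  pt l i.+1 < pt l i.
Definition addable (n : nat) (l : part n) (j : 'I_n.+1) : bool :=
  (val j == 0) || (pt l j < pt l j.-1).

Definition star_simplex (n : nat) (l : part n) (c : 'I_n.+1) : {set part n} :=
  l |: [set m | (m != l) &&
        [exists a : 'I_n.+1, [&& addable l a, a != c & moved l m c a]]].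

Definition top_simplex (n : nat) (l : part n) (a : 'I_n.+1) : {set part n} :=
  l |: [set m | (m != l) &&
        [exists c : 'I_n.+1, [&& removable l c, c != a & moved l m c a]]].

Definition Cfam (n : nat) : {set {set part n}} :=
  [set S | [exists l : part n, exists c : 'I_n.+1,
              removable l c && (S == star_simplex l c)]]
  :|: [set S | [exists l : part n, exists a : 'I_n.+1,
              addable l a && (S == top_simplex l a)]].

Definition euler_N (n : nat) : int :=
  \sum_(F : {set {set part n}} |
          [&& F \subset Cfam n, F != set0 &
              [exists v : part n, [forall S in F, v \in S]]])
     ((-1) ^+ (#|F|.-1))%R.

(* Main.v *)
Require Import Defs.
From mathcomp Require Import all_boot all_order all_algebra.
From mathcomp Require Import zify.
From Stdlib Require Import Classical.
Import GRing.Theory.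

Lemma cnt_mod (P : pred nat) (g h : nat -> nat) i j N :
  i != j -> (forall p, p != i -> p != j -> g p = h p) ->
  count P (map g (iota 0 N)) + (i < N) * P (h i) + (j < N) * P (h j) =
  count P (map h (iota 0 N)) + (i < N) * P (g i) + (j < N) * P (g j).
Proof.
move=> ij Hgh; elim: N => [|N IH] //.
rewrite -addn1 iotaD !map_cat !count_cat /= !addn0 add0n.
have Ei : (i < N + 1) = (i == N) || (i < N) by rewrite addn1 ltnS leq_eqVlt.
have Ej : (j < N + 1) = (j == N) || (j < N) by rewrite addn1 ltnS leq_eqVlt.
rewrite Ei Ej.
case: (eqVneq i N) => [eiN|niN]; case: (eqVneq j N) => [ejN|njN].
- by move: ij; rewrite eiN ejN eqxx.
- subst i; rewrite ltnn /=; move: IH; rewrite ltnn /=; lia.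
- subst j; rewrite ltnn /=; move: IH; rewrite ltnn /=; lia.
- rewrite Hgh 1?eq_sym //= ; move: IH; lia.
Qed.

Lemma geq_trans : transitive geq.
Proof. by move=> b a c /= H1 H2; exact: leq_trans H2 H1. Qed.

Section Parts.
Variable n : nat.
Implicit Types l m w : part n.

Definition rows l : seq nat := [seq val (val l i) | i <- enum 'I_n.+1].
Definition NN l k := count (leq k) (rows l).

Lemma size_rows l : size (rows l) = n.+1.
Proof. by rewrite size_map size_enum_ord. Qed.

Lemma rows_iota l : [seq pt l k | k <- iota 0 n.+1] = rows l.
Proof. by rewrite -(size_rows l) -[RHS](mkseq_nth 0). Qed.

Lemma rows_sorted l : sorted geq (rows l).
Proof.
apply/(sortedP 0) => i; rewrite size_rows => Hi.
have := valP l; rewrite /is_part => /andP [/forallP H _].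
by move: (H (Ordinal (ltnW Hi))).
Qed.

Lemma sorted_pos (s : seq nat) k v : sorted geq s -> k < size s ->
  (v <= nth 0 s k) = (k < count (leq v) s).
Proof.
elim: s k => [|x s IH] k //= Hs Hk.
have Hall : all (geq x) s by apply: (order_path_min geq_trans).
have Hs' : sorted geq s by apply: path_sorted Hs.
case: (leqP v x) => vx.
  case: k Hk => [|k] Hk //=; rewrite add1n ltnS IH //.
have c0 : count (leq v) s = 0.
  apply/eqP; rewrite -leqn0 leqNgt -has_count; apply/hasPn => y ys.
  have := allP Hall y ys; rewrite /= -ltnNge => yx; exact: leq_ltn_trans yx vx.
rewrite c0 /=; case: k Hk => [|k] Hk /=; first by rewrite leqNgt vx.
apply/negbTE; rewrite -ltnNge; apply: leq_ltn_trans vx.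
exact: (allP Hall) (mem_nth 0 _).
Qed.

Lemma NN_le l v : NN l v <= n.+1.
Proof. by rewrite -(size_rows l) count_size. Qed.

Lemma pt_ge l k v : 0 < v -> (v <= pt l k) = (k < NN l v).
Proof.
move=> v0; case: (ltnP k n.+1) => Hk.
  by apply: sorted_pos; rewrite ?size_rows // rows_sorted.
rewrite /pt /ptf nth_default; last by rewrite size_map size_enum_ord.
rewrite leqNgt v0; symmetry; apply/negbTE; rewrite -leqNgt.
exact: leq_trans (NN_le l v) Hk.
Qed.

Lemma NN_mono l k k' : k <= k' -> NN l k' <= NN l k.
Proof.
move=> kk; apply: sub_count => v /= Hv; exact: leq_trans kk Hv.
Qed.

Lemma count_leq_split (s : seq nat) x :
  count (leq x) s = count_mem x s + count (leq x.+1) s.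
Proof.
elim: s => //= y s ->; case: (ltngtP x y) => H //=; lia.
Qed.

Lemma perm_of_NN (s t : seq nat) :
  (forall k, count (leq k) s = count (leq k) t) -> perm_eq s t.
Proof.
move=> H; apply/allP => x _; apply/eqP.
have := H x; have := H x.+1; rewrite (count_leq_split s x) (count_leq_split t x); lia.
Qed.

Lemma NN_inj l m : (forall k, NN l k = NN m k) -> l = m.
Proof.
move=> H.
have E : rows l = rows m.
  apply: (sorted_eq geq_trans) ; rewrite ?rows_sorted //.
    move=> a b /andP [/= H1 H2]; apply/eqP; by rewrite eqn_leq H1 H2.
  exact: perm_of_NN.
apply: val_inj; apply/ffunP => i; apply: val_inj.
have := congr1 (fun s => nth 0 s i) E.
by rewrite /rows !(nth_map ord0) -?enumT ?size_enum_ord ?ltn_ord // nth_ord_enum; apply.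
Qed.

End Parts.


Set Implicit Arguments. Unset Strict Implicit.
Arguments NN {n} l k.
Arguments rows {n} l.
Section Parts2.
Variable n : nat.
Implicit Types l m w : part n.

Lemma mod_NN l (i j : nat) k : 0 < pt l i -> i != j -> i < n.+1 -> j < n.+1 ->
  count (leq k) [seq pt l p + (p == j) - (p == i) | p <- iota 0 n.+1]
    + (k == pt l i) = NN l k + (k == (pt l j).+1).
Proof.
move=> pi ij Hi Hj.
have Hgh : forall p, p != i -> p != j -> pt l p + (p == j) - (p == i) = pt l p.
  by move=> p /negbTE -> /negbTE ->; rewrite addn0 subn0.
have := @cnt_mod (leq k) (fun p => pt l p + (p == j) - (p == i)) (pt l) i j n.+1 ij Hgh.
rewrite Hi Hj rows_iota !mul1n eqxx (negbTE ij) (eq_sym j i) (negbTE ij).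
have F1 : (k <= pt l i) = (k == pt l i) + (k <= (pt l i).-1) :> nat.
  by case: (ltngtP k (pt l i)) => //=; lia.
have F2 : (k <= (pt l j).+1) = (k == (pt l j).+1) + (k <= pt l j) :> nat.
  by case: (ltngtP k (pt l j).+1) => //=; lia.
rewrite /NN eqxx; move: F1 F2 (ltn_predK pi); lia.
Qed.

Lemma moved_NN l m (i j : nat) : moved l m i j -> i != j -> i < n.+1 -> j < n.+1 ->
  forall k, NN m k + (k == pt l i) = NN l k + (k == (pt l j).+1).
Proof.
case/andP => pi Hp ij Hi Hj k.
rewrite -(mod_NN k pi ij Hi Hj); congr (_ + _).
by rewrite /NN -rows_iota (permP Hp).
Qed.

Lemma adj_wit l m : adj l m -> exists x y, [/\ 0 < x, 0 < y, x != y &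
  forall k, NN m k + (k == x) = NN l k + (k == y)].
Proof.
case/andP => lm /existsP [i /existsP [j /andP [ij Hm]]].
have Hm' := Hm; case/andP: Hm' => pi _.
have H := moved_NN Hm ij (ltn_ord i) (ltn_ord j).
exists (pt l i), (pt l j).+1; split => //.
apply/eqP => E; move/eqP: lm; apply; apply: NN_inj => k; have := H k; rewrite E; lia.
Qed.

Lemma corner_last l x : 0 < x -> NN l x.+1 < NN l x ->
  [/\ (NN l x).-1 < n.+1, pt l (NN l x).-1 = x & pt l (NN l x) < x].
Proof.
move=> x0 lt.
have p0 : 0 < NN l x by apply: leq_ltn_trans lt.
have c1 : (NN l x).-1 < NN l x by rewrite prednK.
have c2 : NN l x.+1 <= (NN l x).-1 by rewrite -ltnS prednK.
split.
- by apply: leq_trans c1 (NN_le _ _ _).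
- apply/eqP; rewrite eqn_leq -ltnS ltnNge (pt_ge _ _ _ _ (ltn0Sn _)) -leqNgt c2 /=.
  by rewrite (pt_ge _ _ _ _ x0).
- by rewrite ltnNge (pt_ge _ _ _ _ x0) ltnn.
Qed.

Lemma corner_first l y : 0 < y -> NN l y < NN l y.-1 ->
  [/\ NN l y < n.+1, pt l (NN l y) = y.-1 &
      (NN l y == 0) || (pt l (NN l y) < pt l (NN l y).-1)].
Proof.
move=> y0 lt.
have A : NN l y < n.+1 by apply: leq_trans lt (NN_le _ _ _).
have B : pt l (NN l y) = y.-1.
  apply/eqP; rewrite eqn_leq -ltnS prednK // ltnNge (pt_ge _ _ _ _ y0) ltnn /=.
  case: (posnP y.-1) => [-> //|p1]; by rewrite (pt_ge _ _ _ _ p1).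
split => //; case: (posnP (NN l y)) => [->//|p0]; rewrite orbC.
rewrite B orbF prednK // (pt_ge _ _ _ _ y0) prednK //.
Qed.

End Parts2.

Set Implicit Arguments. Unset Strict Implicit.

Section Parts3.
Variable n : nat.
Implicit Types l m w : part n.

Lemma rev_move l m x y : 0 < x -> 0 < y -> x != y ->
  (forall k, NN m k + (k == x) = NN l k + (k == y)) ->
  [/\ removable l (inord (NN l x).-1), addable l (inord (NN l y)),
      (inord (NN l x).-1 : 'I_n.+1) != inord (NN l y) &
      moved l m (inord (NN l x).-1 : 'I_n.+1) (inord (NN l y) : 'I_n.+1)].
Proof.
move=> x0 y0 xy H.
have Hx := H x; have Hx1 := H x.+1; have Hy := H y; have Hy1 := H y.-1.
rewrite eqxx (negbTE xy) in Hx; rewrite eq_sym (negbTE xy) eqxx in Hy.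
rewrite (gtn_eqF (ltnSn x)) in Hx1.
have yy : y.-1 < y by rewrite ltn_predL.
rewrite (ltn_eqF yy) in Hy1.
have mx := NN_mono _ m _ _ (leqnSn x).
have my := NN_mono _ m _ _ (leq_pred y).
have g1 : NN l x.+1 < NN l x by move: Hx Hx1 mx; lia.
have g2 : NN l y < NN l y.-1 by move: Hy Hy1 my; lia.
case: (corner_last x0 g1) => c1 c2 c3.
case: (corner_first y0 g2) => a1 a2 a3.
have cx : 0 < NN l x by apply: leq_ltn_trans g1.
have ca : (NN l x).-1 != NN l y.
  apply/eqP => E; have E2 : x = y.-1 by rewrite -c2 -a2 E.
  move: Hy1; rewrite -E2 eqxx => Hy1.
  have Em : NN m y.-1 = NN m x by rewrite E2.
  move: E Hy1 Hy my cx Em; lia.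
split.
- by rewrite /removable !inordK // prednK // c2.
- by rewrite /addable /= !inordK //.
- by apply: contra ca => /eqP/(congr1 val) /=; rewrite !inordK // => ->.
rewrite /moved !inordK // c2 x0 andTb.
rewrite -[X in perm_eq _ X]/(map (pt m) (iota 0 n.+1)) rows_iota.
apply: perm_of_NN => k.
have := mod_NN k (i:=(NN l x).-1) (j := NN l y) (l:=l).
rewrite c2 => Hm; have {}Hm := Hm x0 ca c1 a1; rewrite a2 prednK // in Hm.
have := H k; move: Hm; rewrite /NN; lia.
Qed.

Lemma adj_of l m x y : 0 < x -> 0 < y -> x != y ->
  (forall k, NN m k + (k == x) = NN l k + (k == y)) -> adj l m.
Proof.
move=> x0 y0 xy H; case: (rev_move x0 y0 xy H) => _ _ ca mv.
apply/andP; split.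
  apply/eqP => E; subst m; have := H x; rewrite eqxx (negbTE xy); lia.
by apply/existsP; exists (inord (NN l x).-1); apply/existsP; exists (inord (NN l y));
  rewrite ca.
Qed.

Lemma wit_uniq l m x y x' y' : x != y -> x' != y' ->
  (forall k, NN m k + (k == x) = NN l k + (k == y)) ->
  (forall k, NN m k + (k == x') = NN l k + (k == y')) -> x = x' /\ y = y'.
Proof.
move=> xy xy' H H'.
have E k : (k == x) + (k == y') = (k == x') + (k == y) :> nat.
  by have := H k; have := H' k; lia.
have ex : x = x'.
  have := E x; rewrite eqxx (negbTE xy).
  by case: eqP => // _; case: eqP => // _.
subst x'; split => //.
have := E y; rewrite eqxx eq_sym (negbTE xy).
by case: eqP.
Qed.

Lemma share l m w x1 y1 x2 y2 : x1 != y1 -> x2 != y2 ->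
  (forall k, NN m k + (k == x1) = NN l k + (k == y1)) ->
  (forall k, NN w k + (k == x2) = NN l k + (k == y2)) ->
  adj m w -> x1 = x2 \/ y1 = y2.
Proof.
move=> xy1 xy2 H1 H2 /adj_wit [p [q [p0 q0 pq H3]]].
have E k : (k == y2) + (k == x1) + (k == p) = (k == x2) + (k == y1) + (k == q) :> nat.
  by have := H1 k; have := H2 k; have := H3 k; lia.
case: (eqVneq x1 x2) => [->|nx]; [by left|right].
case: (eqVneq y1 y2) => [//|ny]; exfalso.
have := E y2; rewrite eqxx (eq_sym y2 x2) (negbTE xy2) (eq_sym y2 y1) (negbTE ny).
case: (eqVneq y2 q) => [eq|nq]; last by lia.
subst q => Eq.
case: (eqVneq y2 x1) Eq => [ex|nyx] Eq; first by lia.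
have := E x1; rewrite eqxx (negbTE nx) (negbTE xy1) (eq_sym x1 y2) (negbTE nyx); lia.
Qed.

End Parts3.

Set Implicit Arguments. Unset Strict Implicit.

Section Parts4.
Variable n : nat.
Implicit Types l m w : part n.

Definition W l m x y := forall k, NN m k + (k == x) = NN l k + (k == y).

Lemma adj_sym l m : adj l m -> adj m l.
Proof.
case/adj_wit => x [y [x0 y0 xy H]].
apply: (adj_of (x:=y) (y:=x)) => //; first by rewrite eq_sym.
Qed.

Lemma moved_wit l m (i j : 'I_n.+1) : moved l m i j -> i != j -> m != l ->
  [/\ 0 < pt l i, pt l i != (pt l j).+1 & W l m (pt l i) (pt l j).+1].
Proof.
move=> Hm ij ml; have H := moved_NN Hm ij (ltn_ord i) (ltn_ord j).
split => //; first by case/andP: Hm.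
apply/eqP => E; move/eqP: ml; apply; apply: NN_inj => k; have := H k; rewrite E; lia.
Qed.

Lemma W_neq l m x y : W l m x y -> x != y -> m != l.
Proof. by move=> H xy; apply/eqP => E; subst m; have := H x; rewrite eqxx (negbTE xy); lia. Qed.

Lemma star_clique l c : is_clique (star_simplex l c).
Proof.
have Hw u : u \in star_simplex l c -> u != l ->
    exists y, [/\ 0 < pt l c, 0 < y, pt l c != y & W l u (pt l c) y].
  rewrite !inE => /orP [/eqP -> |]; first by rewrite eqxx.
  case/andP => ul /existsP [a /and3P [_ ac Hm]] _.
  have ca : c != a by rewrite eq_sym.
  exists (pt l a).+1; have [p1 p2 p3] := moved_wit Hm ca ul.
  by split.
apply/forall_inP => u uS; apply/forall_inP => v vS; apply/implyP => uv.
case: (eqVneq u l) => [eul|nul]; case: (eqVneq v l) => [evl|nvl].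
- by move: uv; rewrite eul evl eqxx.
- subst u; case: (Hw v vS nvl) => y [x0 y0 xy H]; exact: adj_of x0 y0 xy H.
- subst v; case: (Hw u uS nul) => y [x0 y0 xy H]; apply: adj_sym; exact: adj_of x0 y0 xy H.
- case: (Hw u uS nul) => yu [x0 yu0 xyu Hu]; case: (Hw v vS nvl) => yv [_ yv0 xyv Hv].
  have yy : yu != yv.
    apply/eqP => E; subst yv; move/eqP: uv; apply; apply: NN_inj => k.
    have := Hu k; have := Hv k; lia.
  apply: (adj_of (x:=yu) (y:=yv)) => // k; have := Hu k; have := Hv k; lia.
Qed.

Lemma top_clique l a : is_clique (top_simplex l a).
Proof.
have Hw u : u \in top_simplex l a -> u != l ->
    exists x, [/\ 0 < x, x != (pt l a).+1 & W l u x (pt l a).+1].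
  rewrite !inE => /orP [/eqP -> |]; first by rewrite eqxx.
  case/andP => ul /existsP [c /and3P [_ ca Hm]] _.
  exists (pt l c); have [p1 p2 p3] := moved_wit Hm ca ul.
  by split.
apply/forall_inP => u uS; apply/forall_inP => v vS; apply/implyP => uv.
have y0 : 0 < (pt l a).+1 by [].
case: (eqVneq u l) => [eul|nul]; case: (eqVneq v l) => [evl|nvl].
- by move: uv; rewrite eul evl eqxx.
- subst u; case: (Hw v vS nvl) => x [x0 xy H]; exact: adj_of x0 y0 xy H.
- subst v; case: (Hw u uS nul) => x [x0 xy H]; apply: adj_sym; exact: adj_of x0 y0 xy H.
- case: (Hw u uS nul) => xu [xu0 xyu Hu]; case: (Hw v vS nvl) => xv [xv0 xyv Hv].
  have xx : xv != xu.
    apply/eqP => E; subst xv; move/eqP: uv; apply; apply: NN_inj => k.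
    have := Hu k; have := Hv k; lia.
  apply: (adj_of (x:=xv) (y:=xu)) => // k; have := Hu k; have := Hv k; lia.
Qed.

Lemma pt0_pos l : 0 < n -> 0 < pt l 0.
Proof.
move=> n0; rewrite (pt_ge _ _ _ _ (ltn0Sn 0)).
case: (posnP (NN l 1)) => // N0; exfalso.
have := valP l; rewrite /is_part => /andP [_ /eqP Hs].
have : \sum_(i < n.+1) val (val l i) = 0.
  apply: big1 => i _; apply/eqP; rewrite -leqn0 leqNgt.
  have -> : val (val l i) = pt l i.
    by rewrite /pt /ptf (nth_map ord0) -?enumT ?size_enum_ord ?ltn_ord // nth_ord_enum.
  by rewrite (pt_ge _ _ _ _ (ltn0Sn 0)) N0.
by rewrite Hs => E; move: n0; rewrite E.
Qed.

End Parts4.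

Set Implicit Arguments. Unset Strict Implicit.

Section Parts5.
Variable n : nat.
Implicit Types l m w : part n.

Lemma cl_adj (S : {set part n}) u v : is_clique S -> u \in S -> v \in S -> u != v -> adj u v.
Proof.
by move=> /forall_inP H uS vS uv; move: (H u uS) => /forall_inP /(_ v vS) /implyP; apply.
Qed.

Lemma starA (S : {set part n}) l x : removable l (inord (NN l x).-1) -> 0 < x ->
  (forall m, m \in S -> m != l -> exists y, [/\ 0 < y, x != y & W l m x y]) ->
  exists2 X, X \in Cfam n & S \subset X.
Proof.
move=> rem x0 H; exists (star_simplex l (inord (NN l x).-1)).
  rewrite inE; apply/orP; left; rewrite inE; apply/existsP; exists l.
  by apply/existsP; exists (inord (NN l x).-1); rewrite rem /= ?eqxx.
apply/subsetP => m mS; rewrite !inE; case: (eqVneq m l) => [->|ml] //=.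
case: (H m mS ml) => y [y0 xy Hw]; case: (rev_move x0 y0 xy Hw) => _ add ca mv.
apply/existsP; exists (inord (NN l y)).
by rewrite add eq_sym ca mv.
Qed.

Lemma topB (S : {set part n}) l y : addable l (inord (NN l y)) -> 0 < y ->
  (forall m, m \in S -> m != l -> exists x, [/\ 0 < x, x != y & W l m x y]) ->
  exists2 X, X \in Cfam n & S \subset X.
Proof.
move=> add y0 H; exists (top_simplex l (inord (NN l y))).
  rewrite inE; apply/orP; right; rewrite inE; apply/existsP; exists l.
  by apply/existsP; exists (inord (NN l y)); rewrite add /= ?eqxx.
apply/subsetP => m mS; rewrite !inE; case: (eqVneq m l) => [->|ml] //=.
case: (H m mS ml) => x [x0 xy Hw]; case: (rev_move x0 y0 xy Hw) => rem _ ca mv.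
apply/existsP; exists (inord (NN l x).-1).
by rewrite rem ca mv.
Qed.

Lemma cover (S : {set part n}) : 0 < n -> is_clique S -> S != set0 ->
  exists2 X, X \in Cfam n & S \subset X.
Proof.
move=> n0 cS /set0Pn [l lS].
case: (boolP (S \subset [set l])) => sub.
  have p0 := pt0_pos l n0.
  have Nt : NN l (pt l 0).+1 = 0.
    apply/eqP; rewrite -leqn0 leqNgt -(pt_ge _ _ _ _ (ltn0Sn _)) ltnn //.
  have Np : 0 < NN l (pt l 0) by rewrite -(pt_ge _ _ _ _ p0).
  apply: (starA (l:=l) (x := pt l 0)) => //.
    have g1 : NN l (pt l 0).+1 < NN l (pt l 0) by rewrite Nt.
    case: (corner_last p0 g1) => c1 c2 c3.
    by rewrite /removable !inordK // prednK // c2.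
  by move=> m /(subsetP sub); rewrite inE => ->.
case/subsetPn: sub => m0 m0S; rewrite inE => m0l.
have lm0 : l != m0 by rewrite eq_sym.
have [x0 [y0 [x00 y00 xy0 H0]]] := adj_wit (cl_adj cS lS m0S lm0).
case: (rev_move x00 y00 xy0 H0) => rem0 add0 _ _.
case: (classic (forall m, m \in S -> m != l ->
         exists y, [/\ 0 < y, x0 != y & W l m x0 y])) => [PA|nPA].
  exact: starA rem0 x00 PA.
have [m1 Hm1] : exists m1, ~ (m1 \in S -> m1 != l ->
         exists y, [/\ 0 < y, x0 != y & W l m1 x0 y]) by apply: not_all_ex_not.
have [m1S Hm1'] := imply_to_and _ _ Hm1.
have [m1l Hm1''] := imply_to_and _ _ Hm1'.
have lm1 : l != m1 by rewrite eq_sym.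
have [x1 [y1 [x10 y10 xy1 H1]]] := adj_wit (cl_adj cS lS m1S lm1).
have x01 : x0 != x1.
  by apply/eqP => E; apply: Hm1''; exists y1; rewrite E.
have m01 : m0 != m1.
  by apply/eqP => E; apply: Hm1''; exists y0; rewrite -E.
have ey : y0 = y1.
  case: (share xy0 xy1 H0 H1 (cl_adj cS m0S m1S m01)) => // E.
  by move: x01; rewrite E eqxx.
apply: (topB (l:=l) add0 y00) => m mS ml.
have lm : l != m by rewrite eq_sym.
have [x [y [x0' y0' xy Hm]]] := adj_wit (cl_adj cS lS mS lm).
case: (eqVneq y y0) => [eyy|nyy].
  by exists x; subst y.
exfalso.
have mm0 : m0 != m.
  apply/eqP => E; subst m; have [_ E2] := wit_uniq xy0 xy H0 Hm.
  by move: nyy; rewrite E2 eqxx.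
have mm1 : m1 != m.
  apply/eqP => E; subst m; have [_ E2] := wit_uniq xy1 xy H1 Hm.
  by move: nyy; rewrite -E2 ey eqxx.
have e0 : x0 = x.
  case: (share xy0 xy H0 Hm (cl_adj cS m0S mS mm0)) => // E.
  by move: nyy; rewrite E eqxx.
have e1 : x1 = x.
  case: (share xy1 xy H1 Hm (cl_adj cS m1S mS mm1)) => // E.
  by move: nyy; rewrite -E -ey eqxx.
by move: x01; rewrite e0 e1 eqxx.
Qed.

End Parts5.

Local Open Scope ring_scope.

Section Alt.
Variable U : finType.

Lemma alt_sum0 (X : {set U}) (x0 : U) : x0 \in X ->
  \sum_(A : {set U} | A \subset X) ((-1) ^+ #|A| : int) = 0.
Proof.
move=> x0X.
pose f (A : {set U}) := if x0 \in A then A :\ x0 else x0 |: A.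
have fK : involutive f.
  move=> A; rewrite /f; case xA: (x0 \in A).
    by rewrite setD11 setD1K.
  by rewrite setU11 setU1K ?xA.
set S := \sum_(A | _) _.
have HS : S = - S.
  rewrite {1}/S (reindex_inj (inv_inj fK)) /S -sumrN.
  apply: eq_big => A.
    rewrite /f; case: ifP => xA.
      apply/idP/idP => H.
        by rewrite -(setD1K xA) subUset sub1set x0X.
      by apply: subset_trans H; apply: subD1set.
    by rewrite subUset sub1set x0X.
  move=> _; rewrite /f; case: ifP => xA.
    by rewrite (cardsD1 x0 A) xA add1n exprS mulN1r opprK.
  by rewrite cardsU1 xA add1n exprS mulN1r.
by move: HS; lia.
Qed.

Lemma alt_sum1 (X : {set U}) : X != set0 ->
  \sum_(A : {set U} | (A \subset X) && (A != set0)) ((-1) ^+ (#|A|.-1) : int) = 1.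
Proof.
case/set0Pn => x0 x0X.
have := @alt_sum0 X x0 x0X.
rewrite (bigD1 set0) ?sub0set //= cards0 expr0 => H.
have -> : \sum_(A : {set U} | (A \subset X) && (A != set0)) ((-1) ^+ (#|A|.-1) : int)
   = - \sum_(A : {set U} | (A \subset X) && (A != set0)) ((-1) ^+ #|A| : int).
  rewrite -sumrN; apply: eq_bigr => A /andP [_ An0].
  have : (0 < #|A|)%N by rewrite card_gt0.
  by case: #|A| => // k _; rewrite exprS mulN1r opprK.
by move/eqP: H; rewrite addrC addr_eq0 => /eqP ->; rewrite opprK.
Qed.

Lemma alt_sum_empty :
  \sum_(A : {set U} | (A \subset set0) && (A != set0)) ((-1) ^+ (#|A|.-1) : int) = 0.
Proof.
by rewrite big1 // => A /andP [H1 H2]; move: H1; rewrite subset0 (negbTE H2).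
Qed.

End Alt.


Lemma euler_cover (T : finType) (P : pred {set T}) (C : {set {set T}}) :
  (forall (S X : {set T}), X \in C -> S \subset X -> P S) ->
  (forall S : {set T}, P S -> S != set0 -> exists2 X, X \in C & S \subset X) ->
  \sum_(S : {set T} | P S && (S != set0)) ((-1)^+(#|S|.-1) : int) =
  \sum_(F : {set {set T}} | [&& F \subset C, F != set0 &
        [exists v, [forall S in F, v \in S]]]) ((-1)^+(#|F|.-1)).
Proof.
move=> HC HP.
pose I (F : {set {set T}}) := [set v | [forall X in F, v \in X]].
symmetry.
transitivity (\sum_(F : {set {set T}} | [&& F \subset C, F != set0 &
        [exists v, [forall S in F, v \in S]]])
   \sum_(A : {set T} | (A \subset I F) && (A != set0))
      ((-1)^+(#|F|.-1) * (-1)^+(#|A|.-1) : int)).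
  apply: eq_bigr => F /and3P [_ _ Hex].
  rewrite -mulr_sumr alt_sum1 ?mulr1 //.
  case/existsP: Hex => v Hv; apply/set0Pn; exists v; by rewrite inE.
rewrite (exchange_big_dep (fun A : {set T} => A != set0)) /=; last first.
  by move=> F A _ /andP [].
rewrite [LHS](bigID (fun A => P A)) /=.
rewrite [X in _ + X = _]big1 ?addr0; last first.
  move=> A /andP [An0 nPA]; apply: big1 => F /andP [/and3P [FC Fn0 _] /andP [AI _]].
  exfalso; move/negP: nPA; apply; case/set0Pn: Fn0 => X XF.
  apply: (HC A X); first by apply: (subsetP FC).
  by apply/subsetP => v /(subsetP AI); rewrite inE => /forall_inP; apply.
rewrite [LHS](eq_bigl (fun A => P A && (A != set0))); last by move=> A; rewrite andbC.
apply: eq_bigr => A /andP [PA An0].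
rewrite -mulr_suml.
pose CA := [set X in C | A \subset X].
rewrite (eq_bigl (fun F : {set {set T}} => (F \subset CA) && (F != set0))); last first.
  move=> F; rewrite An0 andbT.
  apply/idP/idP.
    case/andP=> /and3P [FC Fn0 _] AI; rewrite Fn0 andbT.
    apply/subsetP => X XF; rewrite inE (subsetP FC) //=.
    by apply/subsetP => v /(subsetP AI); rewrite inE => /forall_inP; apply.
  case/andP => FCA Fn0.
  have FC : F \subset C.
    by apply/subsetP => X /(subsetP FCA); rewrite inE => /andP [].
  have AI : A \subset I F.
    apply/subsetP => v vA; rewrite inE; apply/forall_inP => X /(subsetP FCA).
    by rewrite inE => /andP [_ /subsetP]; apply.
  rewrite FC AI Fn0 /=; case/set0Pn: An0 => v vA; rewrite andbT; apply/existsP; exists v.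
  by have := subsetP AI v vA; rewrite inE.
rewrite alt_sum1 ?mul1r //.
case: (HP A PA An0) => X XC AX; apply/set0Pn; exists X; by rewrite inE XC AX.
Qed.


Lemma clique_le_omega n (S : {set part n}) :
  is_clique S -> (#|S| <= omega n)%N.
Proof.
move=> cS; rewrite /omega.
have Hlt : (#|S| < #|{: part n}|.+1)%N by rewrite ltnS max_card.
have := @leq_bigmax_cond _ (fun r : 'I_(#|{: part n}|.+1) => ccount n r != 0%N)
  (fun r => nat_of_ord r) (Ordinal Hlt).
apply => /=; rewrite /ccount -lt0n card_gt0; apply/set0Pn; exists S.
by rewrite inE cS eqxx.
Qed.

Lemma partA n : euler_K n =
  \sum_(1 <= r < (omega n).+1) (-1) ^+ (r.-1) * (ccount n r)%:Z.
Proof.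
have E r : (-1) ^+ (r.-1) * (ccount n r)%:Z =
   \sum_(S : {set part n} | is_clique S && (#|S| == r)) (-1) ^+ (#|S|.-1) :> int.
  rewrite (eq_bigr (fun _ => (-1) ^+ (r.-1))); last by move=> S /andP [_ /eqP ->].
  rewrite /ccount cardsE sumr_const.
  by rewrite -mulr_natr natz.
rewrite (eq_bigr (fun r => \sum_(S : {set part n} | is_clique S && (#|S| == r))
   (-1) ^+ (#|S|.-1))); last by move=> r _; rewrite E.
rewrite (exchange_big_dep (fun S : {set part n} => is_clique S)) /=; last first.
  by move=> r S _ /andP [].
rewrite /euler_K big_mkcondr /=.
apply: eq_bigr => S cS.
case: eqP => [->|/eqP Sn0] /=.
  rewrite big1_seq //= => r /andP [/andP [_ /eqP]]; rewrite cards0 => <-.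
  by rewrite mem_index_iota.
have Hin : #|S| \in index_iota 1 (omega n).+1.
  rewrite mem_index_iota ltnS clique_le_omega // andbT lt0n cards_eq0 //.
rewrite big_mkcond (bigD1_seq #|S|) /= ?iota_uniq // cS eqxx /=.
rewrite big1 ?addr0 // => r rS; by rewrite eq_sym (negbTE rS).
Qed.


Lemma clique_sub n (S X : {set part n}) : is_clique X -> S \subset X -> is_clique S.
Proof.
move=> /forall_inP H sub; apply/forall_inP => u uS; apply/forall_inP => v vS.
by move: (H u (subsetP sub u uS)) => /forall_inP; apply; apply: (subsetP sub).
Qed.

Lemma Cfam_clique n (X : {set part n}) : X \in Cfam n -> is_clique X.
Proof.
rewrite inE => /orP [|]; rewrite inE => /existsP [l /existsP [c /andP [_ /eqP ->]]].
  exact: star_clique.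
exact: top_clique.
Qed.

Theorem proposition3p3 (n : nat) :
  (1 <= n)%N ->
  euler_K n = \sum_(1 <= r < (omega n).+1) (-1) ^+ (r.-1) * (ccount n r)%:Z
  /\ \sum_(1 <= r < (omega n).+1) (-1) ^+ (r.-1) * (ccount n r)%:Z = euler_N n.
Proof.
move=> n0; split; first exact: partA.
rewrite -partA /euler_K /euler_N.
apply: (@euler_cover _ (fun S => is_clique S) (Cfam n)).
  by move=> S X XC sub; apply: clique_sub (Cfam_clique XC) sub.
by move=> S cS Sn0; apply: cover.
Qed.
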